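(* Let $\mathfrak h\subseteq\Phi^+$ be a Hessenberg set, let $w,v\in W$ and suppose $v$ is a cover of $w$, with $v=s_\alpha w$, $\alpha\in\Phi^+$. Let $\beta\in N_v$. Then: (1) if $\beta\in s_\alpha N_w\cap\Phi^+$, then $\beta\in N^{\mathfrak h}_v$ if and only if $s_\alpha\beta\in N^{\mathfrak h}_w$; (2) if $\beta\in N_w\cap s_\alpha\Phi^-$ and $\beta\in N^{\mathfrak h}_v$, then $\beta\in N^{\mathfrak h}_w$.
   Context: $\Phi$ is a crystallographic root system in a real Euclidean space with base $\Delta$, positive roots $\Phi^+$, $\Phi^-=-\Phi^+$, Weyl group $W$ with length function $\ell$, and $s_\alpha$ the reflection through $\alpha$. Write $\alpha\prec\beta$ if $\beta-\alpha$ is a sum of positive roots. A Hessenberg set is a subset $\mathfrak h\subseteq\Phi^+$ whose complement in $\Phi^+$ is upward closed for $\prec$. For $w\in W$, $N_w=\{\alpha\in\Phi^+: w^{-1}\alpha\in\Phi^-\}$ and $N^{\mathfrak h}_w=\{\alpha\in\Phi^+: w^{-1}\alpha\in-\mathfrak h\}$. For $\alpha\in\Phi^+$ the Bruhat graph has an edge $u\to s_\alpha u$ when $(s_\alpha u)^{-1}\alpha\in\Phi^-$. We say $v$ is a cover of $w$ if $v=s_\alpha w$ for some $\alpha\in\Phi^+$ with $w\to v$ an edge of the Bruhat graph and $\ell(v)=\ell(w)+1$. *)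

(* Defs.v *)
(* Root systems are modelled concretely in the Euclidean
   space R^n (column vectors 'cV[R]_n, standard inner product), R : realType. *)
From HB Require Import structures.
From mathcomp Require Import all_boot all_order all_algebra.
From mathcomp Require Import reals.
Set Implicit Arguments. Unset Strict Implicit. Unset Printing Implicit Defensive.
Import Order.TTheory GRing.Theory Num.Theory.
Local Open Scope ring_scope.

Section RootSystems.
Variables (R : realType) (n : nat).
Notation vec := 'cV[R]_n.
Notation mat := 'M[R]_n.

Definition dot (x y : vec) : R := (x^T *m y) 0 0.

(* the reflection s_a as a matrix: s_a x = x - 2 (x,a)/(a,a) a *)
Definition refl_mx (a : vec) : mat :=
  1%:M - (2 / dot a a) *: (a *m a^T).

Definition root_system (Phi : seq vec) : Prop :=
  [/\ uniq Phi,
      (0 : vec) \notin Phi,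
      (forall a b, a \in Phi -> b \in Phi -> refl_mx a *m b \in Phi),
      (forall a b, a \in Phi -> b \in Phi ->
          exists z : int, 2 * dot b a / dot a a = z%:~R)
    & (forall a (c : R), a \in Phi -> c *: a \in Phi -> c = 1 \/ c = -1)].

Definition is_base (Phi Delta : seq vec) : Prop :=
  [/\ {subset Delta <= Phi},
      (forall c : 'I_(size Delta) -> R,
          \sum_(i < size Delta) c i *: Delta`_i = 0 -> forall i, c i = 0)
    & (forall b, b \in Phi -> exists c : 'I_(size Delta) -> int,
          b = \sum_(i < size Delta) (c i)%:~R *: Delta`_i /\
          ((forall i, 0 <= c i) \/ (forall i, c i <= 0)))].

Definition pos_root (Phi Delta : seq vec) (b : vec) : Prop :=
  b \in Phi /\ exists c : 'I_(size Delta) -> nat,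
          b = \sum_(i < size Delta) (c i)%:R *: Delta`_i.
Definition neg_root (Phi Delta : seq vec) (b : vec) : Prop :=
  pos_root Phi Delta (- b).

Definition prec (Phi Delta : seq vec) (a b : vec) : Prop :=
  exists s : seq vec, (forall x, x \in s -> pos_root Phi Delta x) /\
    b - a = \sum_(x <- s) x.

Definition hessenberg (Phi Delta : seq vec) (h : vec -> Prop) : Prop :=
  (forall a, h a -> pos_root Phi Delta a) /\
  (forall a b, pos_root Phi Delta a -> ~ h a ->
      pos_root Phi Delta b -> prec Phi Delta a b -> ~ h b).

Definition prod_refl (s : seq vec) : mat := foldr (fun a m => refl_mx a *m m) 1%:M s.

Definition in_weyl (Phi : seq vec) (w : mat) : Prop :=
  exists s : seq vec, {subset s <= Phi} /\ w = prod_refl s.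

Definition has_length (Delta : seq vec) (w : mat) (k : nat) : Prop :=
  (exists s : seq vec, {subset s <= Delta} /\ size s = k /\ w = prod_refl s) /\
  (forall s : seq vec, {subset s <= Delta} -> w = prod_refl s -> (k <= size s)%N).

Definition Nset (Phi Delta : seq vec) (w : mat) (b : vec) : Prop :=
  pos_root Phi Delta b /\ neg_root Phi Delta (invmx w *m b).
Definition Nhset (Phi Delta : seq vec) (h : vec -> Prop) (w : mat) (b : vec) : Prop :=
  pos_root Phi Delta b /\ h (- (invmx w *m b)).

Definition bruhat_edge (Phi Delta : seq vec) (a : vec) (u : mat) : Prop :=
  pos_root Phi Delta a /\ neg_root Phi Delta (invmx (refl_mx a *m u) *m a).

Definition cover_by (Phi Delta : seq vec) (a : vec) (w v : mat) : Prop :=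
  [/\ pos_root Phi Delta a, v = refl_mx a *m w, bruhat_edge Phi Delta a w
    & exists k, has_length Delta w k /\ has_length Delta v k.+1].

End RootSystems.

(* Main.v *)
Require Import Defs.
From HB Require Import structures.
From mathcomp Require Import all_boot all_order all_algebra.
From mathcomp Require Import reals.

Set Implicit Arguments. Unset Strict Implicit. Unset Printing Implicit Defensive.
Import Order.TTheory GRing.Theory Num.Theory.
Local Open Scope ring_scope.

Section H.
Variables (R : realType) (n : nat).

Lemma dotC (x y : 'cV[R]_n) : dot x y = dot y x.
Proof.
rewrite /dot.
have E : (y^T *m x) 0 0 = ((y^T *m x)^T) 0 0 by rewrite [in RHS]mxE.
by rewrite E trmx_mul trmxK.
Qed.

Lemma dot_self_eq0 (a : 'cV[R]_n) : dot a a = 0 -> a = 0.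
Proof.
rewrite /dot mxE => H; apply/matrixP => i j.
rewrite (ord1 j) mxE.
have P : forall k, predT k -> 0 <= a^T 0 k * a k 0.
  by move=> k _; rewrite mxE; by rewrite -expr2 sqr_ge0.
have := @psumr_eq0P R _ predT (fun k => a^T 0 k * a k 0) P H i isT.
rewrite mxE => /eqP; rewrite mulf_eq0 orbb => /eqP //.
Qed.

Lemma mulmx_col (a x : 'cV[R]_n) : a *m a^T *m x = dot a x *: a.
Proof. by rewrite -mulmxA [a^T *m x]mx11_scalar mul_mx_scalar. Qed.

Lemma refl_apply (a x : 'cV[R]_n) :
  refl_mx a *m x = x - (2 * dot x a / dot a a) *: a.
Proof.
rewrite /refl_mx mulmxBl mul1mx -scalemxAl mulmx_col scalerA dotC.
by rewrite mulrAC.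
Qed.

Lemma refl_self (a : 'cV[R]_n) : a != 0 -> refl_mx a *m a = - a.
Proof.
move=> a0; have d0 : dot a a != 0 by apply/eqP => /dot_self_eq0 /eqP; rewrite (negPf a0).
rewrite refl_apply mulfK // scaler_nat mulr2n opprD addrA subrr add0r //.
Qed.

Lemma refl_invol (a : 'cV[R]_n) : a != 0 -> refl_mx a *m refl_mx a = 1%:M.
Proof.
move=> a0; have d0 : dot a a != 0 by apply/eqP => /dot_self_eq0 /eqP; rewrite (negPf a0).
rewrite {1}/refl_mx mulmxBl mul1mx -scalemxAl -mulmxA.
have -> : a^T *m refl_mx a = - a^T.
  rewrite /refl_mx mulmxBr mulmx1 -scalemxAr mulmxA [a^T *m a]mx11_scalar mul_scalar_mx scalerA.
  rewrite -/(dot a a) mulfVK // scaler_nat mulr2n opprD addrA subrr add0r //.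
by rewrite mulmxN scalerN opprK /refl_mx subrK.
Qed.

Lemma prod_refl_unit (Phi : seq 'cV[R]_n) (s : seq 'cV[R]_n) :
  (0 : 'cV[R]_n) \notin Phi -> {subset s <= Phi} -> prod_refl s \in unitmx.
Proof.
move=> n0; elim: s => [|a s IH] sub /=; first exact: unitmx1.
rewrite unitmx_mul IH; last by move=> x xs; apply: sub; rewrite inE xs orbT.
have a0 : a != 0.
  by apply/eqP=> a0; move: n0; rewrite -a0 sub // inE eqxx.
by case: (mulmx1_unit (refl_invol a0)) => ->.
Qed.

Lemma inv_sw (a : 'cV[R]_n) (w : 'M[R]_n) :
  a != 0 -> w \in unitmx -> invmx (refl_mx a *m w) = invmx w *m refl_mx a.
Proof.
move=> a0 wU.
have sU : refl_mx a \in unitmx by case: (mulmx1_unit (refl_invol a0)).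
have vU : refl_mx a *m w \in unitmx by rewrite unitmx_mul sU wU.
have E : (refl_mx a *m w) *m (invmx w *m refl_mx a) = 1%:M.
  by rewrite mulmxA -(mulmxA _ w) mulmxV // mulmx1 refl_invol.
rewrite -[invmx (refl_mx a *m w)]mulmx1 -E mulmxA mulVmx // mul1mx //.
Qed.

Lemma sum_nseq (m : nat) (y : 'cV[R]_n) : \sum_(x <- nseq m y) x = y *+ m.
Proof.
elim: m => [|m IH]; first by rewrite big_nil mulr0n.
by rewrite /= big_cons IH mulrS.
Qed.
End H.

From Stdlib Require Import Classical.
Unset Implicit Arguments.

Theorem proposition2p9 (R : realType) (n : nat) (Phi Delta : seq 'cV[R]_n)
  (h : 'cV[R]_n -> Prop) (w v : 'M[R]_n) (alpha beta : 'cV[R]_n) :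
  root_system Phi -> is_base Phi Delta -> hessenberg Phi Delta h ->
  in_weyl Phi w -> in_weyl Phi v ->
  cover_by Phi Delta alpha w v ->
  Nset Phi Delta v beta ->
  ((exists g, Nset Phi Delta w g /\ beta = refl_mx alpha *m g) ->
     pos_root Phi Delta beta ->
     (Nhset Phi Delta h v beta <-> Nhset Phi Delta h w (refl_mx alpha *m beta))) /\
  (Nset Phi Delta w beta ->
     (exists g, neg_root Phi Delta g /\ beta = refl_mx alpha *m g) ->
     Nhset Phi Delta h v beta -> Nhset Phi Delta h w beta).
Proof.
move=> [uPhi n0Phi reflPhi intPhi redPhi] [DsubPhi indep coord] [hpos hup]
  [sw [swP wE]] Wv [apos vE [_ edge] _] [bpos bneg].
have aPhi := apos.1.
have a0 : alpha != 0 by apply/eqP=> a0; move: n0Phi; rewrite -a0 aPhi.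
set s := refl_mx alpha.
have ss : s *m s = 1%:M by exact: refl_invol.
have wU : w \in unitmx by rewrite wE; exact: (prod_refl_unit n0Phi swP).
have vinv : invmx v = invmx w *m s by rewrite vE inv_sw.
split.
  move=> [g [[gpos gneg] Eb]] bp.
  have sb : s *m beta = g by rewrite Eb mulmxA ss mul1mx.
  rewrite /Nhset vinv -mulmxA sb; split=> [[_ H]|[_ H]]; split => //.
move=> [_ wneg] [g [gneg Eb]] [_ hb].
split => //.
have sb : s *m beta = g by rewrite Eb mulmxA ss mul1mx.
have bPhi := bpos.1.
have [z Hz] := intPhi alpha beta aPhi bPhi.
have sbE : s *m beta = beta - z%:~R *: alpha by rewrite /s refl_apply Hz.
case: z Hz sbE => m Hz sbE.
  case: (classic (h (- (invmx w *m beta)))) => // nh.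
  exfalso; apply: (hup _ _ wneg nh (hpos _ hb) _ hb).
  exists (nseq m (invmx w *m alpha)); split.
    move=> x /nseqP [-> _].
    move: edge; rewrite -vE vinv /neg_root -mulmxA /s refl_self // mulmxN opprK //.
  rewrite sum_nseq vinv -mulmxA sbE mulmxBr -scalemxAr.
  have -> : (Posz m)%:~R = m%:R :> R by [].
  by rewrite scaler_nat opprK opprB subrK.
exfalso.
move: bpos gneg apos => [_ [cb Eb']] [_ [cg Eg]] [_ [ca Ea]].
have E0 : \sum_(i < size Delta) (cb i + m.+1 * ca i + cg i)%:R *: Delta`_i = 0.
  have -> : \sum_(i < size Delta) (cb i + m.+1 * ca i + cg i)%:R *: Delta`_i
     = beta + m.+1%:R *: alpha + - g.
    rewrite Eb' Ea Eg scaler_sumr -!big_split; apply: eq_bigr => i _.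
    by rewrite /= scalerA -natrM -!scalerDl -!natrD.
  rewrite -sb sbE.
  by rewrite scaleNr opprK subrr.
have cb0 : forall i, cb i = 0%N.
  move=> i; have := indep _ E0 i; move/eqP; rewrite pnatr_eq0.
  by rewrite !addn_eq0 => /andP [/andP [/eqP]].
have b0 : beta = 0 by rewrite Eb'; apply: big1 => i _; rewrite cb0 scale0r.
by move: n0Phi; rewrite -b0 bPhi.
Qed.
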